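(* Let $(X,\mathcal{B},\mu)$ be a standard $\sigma$-finite measure space. Let $\alpha,\beta,\mathcal{C}$ be sub-$\sigma$-algebras of $\mathcal{B}$. Assume that $\mathcal{C}$ is $\sigma$-finite (i.e. $\mu|_{\mathcal{C}}$ is $\sigma$-finite) and non-atomic. Then $$(\mathcal{C}\vee\alpha\vee\beta)^{*}=(\mathcal{C}\vee\alpha)^{*}\vee(\mathcal{C}\vee\beta)^{*}\quad\text{modulo }\mu^{*}.$$
   Context: Poisson suspension of $(X,\mathcal{B},\mu)$: $X^*$ is the space of (counting) measures $\gamma$ on $X$; $\mathcal{B}^*$ is the $\sigma$-algebra generated by the maps $N(B):\gamma\mapsto\gamma(B)$, $B\in\mathcal{B}$. The measure $\mu^*$ is the unique probability measure on $(X^*,\mathcal{B}^* )$ such that, for pairwise disjoint $B_1,\dots,B_k\in\mathcal{B}$, the random variables $N(B_1),\dots,N(B_k)$ are independent. Moreover, each $N(B)$ is Poisson distributed with parameter $\mu(B)$, with $N(B)=\infty$ a.s. if $\mu(B)=\infty$. For a sub-$\sigma$-algebra $\mathcal{C}\subset\mathcal{B}$, $\mathcal{C}^*:=\sigma(\{N(A):A\in\mathcal{C}\})$. *)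

(* Defs.v *)
From HB Require Import structures.
From mathcomp Require Import all_boot all_order all_algebra.
From mathcomp Require Import all_classical all_reals all_analysis.
From mathcomp Require Import measurable_realfun.

Set Implicit Arguments.
Unset Strict Implicit.
Unset Printing Implicit Defensive.

Import Order.TTheory GRing.Theory Num.Theory.
Local Open Scope classical_set_scope.
Local Open Scope ring_scope.
Local Open Scope ereal_scope.

Section PoissonSuspension.
Context (R : realType) {d : measure_display} (X : measurableType d).

(** Standard Borel space: Borel-isomorphic to a Borel subset of R
    (Kuratowski: equivalent to being Borel-isomorphic to a Borel subset
    of a Polish space). *)
Definition standard_borel : Prop :=
  exists f : X -> R,
    [/\ injective f, measurable_fun setT f, measurable (range f) &
        forall A : set X, measurable A -> measurable (f @` A)].

Definition is_sub_sigma_algebra (C : set (set X)) : Prop :=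
  sigma_algebra setT C /\ C `<=` measurable.

Definition sjoin (A B : set (set X)) : set (set X) := <<s A `|` B >>.

Definition sigma_finite_on (mu : set X -> \bar R) (C : set (set X)) : Prop :=
  exists F : (set X)^nat,
    [/\ forall n, C (F n), \bigcup_n F n = setT & forall n, mu (F n) < +oo].

Definition atom_on (mu : set X -> \bar R) (C : set (set X)) (A : set X) :=
  [/\ C A, 0 < mu A &
      forall B, C B -> B `<=` A -> mu B = 0 \/ mu (A `\` B) = 0].
Definition non_atomic_on (mu : set X -> \bar R) (C : set (set X)) : Prop :=
  forall A, ~ atom_on mu C A.

Definition counting_measure (g : set X -> \bar R) : Prop :=
  [/\ g set0 = 0,
      semi_sigma_additive g,
      (forall A, measurable A -> g A = +oo \/ exists k : nat, g A = k%:R%:E) &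
      (forall A, ~ measurable A -> g A = 0)].

Definition Xstar := {g : set X -> \bar R | counting_measure g}.

Lemma counting_measure0 : counting_measure (fun _ => 0).
Proof.
split=> //; last by move=> A _; right; exists 0%N.
exact: (@measure_semi_sigma_additive _ _ R (@mzero d X R)).
Qed.

HB.instance Definition _ := gen_eqMixin Xstar.
HB.instance Definition _ := gen_choiceMixin Xstar.
HB.instance Definition _ :=
  isPointed.Build Xstar (exist _ (fun _ => 0) counting_measure0).

Definition N (A : set X) (g : Xstar) : \bar R := sval g A.

Definition star_gen (C : set (set X)) : set (set Xstar) :=
  [set E | exists A (S : set (\bar R)), [/\ C A, measurable S & E = N A @^-1` S]].

Definition star (C : set (set X)) : set (set Xstar) := <<s star_gen C >>.

Definition XstarM := g_sigma_algebraType (star_gen measurable).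

Definition poisson_suspension_measure (mu : set X -> \bar R)
    (P : probability XstarM R) : Prop :=
  (forall (n : nat) (B : 'I_n -> set X) (S : 'I_n -> set (\bar R)),
     (forall i, measurable (B i)) ->
     (forall i j, i != j -> B i `&` B j = set0) ->
     (forall i, measurable (S i)) ->
     P (\bigcap_(i in [set: 'I_n]) (N (B i) @^-1` S i) : set XstarM)
     = (\prod_(i < n) fine (P (N (B i) @^-1` S i : set XstarM)))%R%:E)
  /\
  (forall B, measurable B ->
     (mu B < +oo -> forall k : nat,
        P ([set g | N B g = k%:R%:E] : set XstarM)
        = (expR (- fine (mu B)) * fine (mu B) ^+ k / k`!%:R)%R%:E)
     /\ (mu B = +oo -> P ([set g | N B g = +oo] : set XstarM) = 1)).

Definition eq_mod (P : set XstarM -> \bar R) (F G : set (set XstarM)) : Prop :=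
  (forall A, F A -> exists B, G B /\ P ((A `\` B) `|` (B `\` A)) = 0) /\
  (forall B, G B -> exists A, F A /\ P ((A `\` B) `|` (B `\` A)) = 0).

Definition sjoin_star (F G : set (set XstarM)) : set (set XstarM) :=
  <<s F `|` G >>.

End PoissonSuspension.

(* Main.v *)
Require Import Defs.
From HB Require Import structures.
From mathcomp Require Import all_boot all_order all_algebra.
From mathcomp Require Import all_classical all_reals all_analysis.
From mathcomp Require Import measurable_realfun.
From mathcomp Require Import ring lra.
Import Order.TTheory GRing.Theory Num.Theory.
Local Open Scope classical_set_scope.
Local Open Scope ring_scope.
Local Open Scope ereal_scope.
Set Implicit Arguments.
Unset Strict Implicit.
Unset Printing Implicit Defensive.




Section CM.
Context (R : realType) (d : measure_display) (X : measurableType d).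

Definition cmf (g : Xstar R X) : set X -> \bar R := sval g.

Lemma cmf0 g : cmf g set0 = 0.
Proof. by case: g => f [] . Qed.

Lemma cmf_ge0 g A : 0 <= cmf g A.
Proof.
case: g => f [_ _ hv h0] /=; rewrite /cmf /=.
have [mA|nmA] := pselect (measurable A); last by rewrite h0.
by case: (hv A mA) => [->|[k ->]]; rewrite ?leey ?lee_fin.
Qed.

Lemma cmf_ssa g : semi_sigma_additive (cmf g).
Proof. by case: g => f [] . Qed.

HB.instance Definition _ g := isMeasure.Build _ _ _ (cmf g) (@cmf0 g) (@cmf_ge0 g) (@cmf_ssa g).

Lemma NE (A : set X) (g : Xstar R X) : N A g = cmf g A. Proof. by []. Qed.

Lemma N_vals (A : set X) (g : Xstar R X) : measurable A -> N A g = +oo \/ exists k : nat, N A g = k%:R%:E.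
Proof. by case: g => f [_ _ hv h0] /= mA; exact: hv. Qed.

End CM.



Section CM2.
Context (R : realType) (d : measure_display) (X : measurableType d).
Implicit Types (A B c x y : set X).
Variable (g : {measure set X -> \bar R}).
Hypothesis gv : forall A, measurable A -> g A = +oo \/ exists k : nat, g A = k%:R%:E.
Local Notation cmf g := g.

Lemma cm01 A : measurable A -> cmf g A <= 1 -> cmf g A = 0 \/ cmf g A = 1.
Proof.
move=> mA; case: (gv mA); first by move=> ->; rewrite leye_eq.
case=> k ->; case: k => [|[|k]]; [by left|by right|].
by rewrite lee_fin (ler_nat _ k.+2 1).
Qed.

Lemma cm_prod c x y : measurable c -> measurable x -> measurable y ->
  cmf g c = 0 \/ cmf g c = 1 ->
  cmf g (c `&` (x `&` y)) = cmf g (c `&` x) * cmf g (c `&` y).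
Proof.
move=> mc mx my hc.
have mcx : measurable (c `&` x) by exact: measurableI.
have mcy : measurable (c `&` y) by exact: measurableI.
have mcxy : measurable (c `&` (x `&` y)) by apply: measurableI => //; exact: measurableI.
have le1 A : measurable A -> A `<=` c -> cmf g A <= cmf g c.
  by move=> mA Ac; apply: le_measure; rewrite ?inE.
have leS A B : measurable A -> measurable B -> A `<=` B -> cmf g A <= cmf g B.
  by move=> mA mB AB; apply: le_measure; rewrite ?inE.
case: hc => hc.
  have -> : cmf g (c `&` (x `&` y)) = 0.
    by apply/eqP; rewrite eq_le measure_ge0 andbT -hc le1 // => z [].
  have -> : cmf g (c `&` x) = 0.
    by apply/eqP; rewrite eq_le measure_ge0 andbT -hc le1 // => z [].
  by rewrite mul0e.
have cx01 : cmf g (c `&` x) = 0 \/ cmf g (c `&` x) = 1.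
  by apply: cm01 => //; rewrite -hc le1 // => z [].
have cy01 : cmf g (c `&` y) = 0 \/ cmf g (c `&` y) = 1.
  by apply: cm01 => //; rewrite -hc le1 // => z [].
case: cx01 => hx.
  rewrite hx mul0e; apply/eqP; rewrite eq_le measure_ge0 andbT.
  by rewrite -[X in _ <= X]hx leS // => z [? [? ?]]; split.
case: cy01 => hy.
  rewrite hy mule0; apply/eqP; rewrite eq_le measure_ge0 andbT.
  by rewrite -[X in _ <= X]hy leS // => z [? [? ?]]; split.
rewrite hx hy mule1.
have mcDx : measurable (c `\` x) by exact: measurableD.
have mcDy : measurable (c `\` y) by exact: measurableD.
have hDx : cmf g (c `\` x) = 0.
  have cfin : g c < +oo by rewrite hc ltry.
  rewrite measureD //; change (g c - g (c `&` x) = 0); by rewrite hc hx subee.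
have hDy : cmf g (c `\` y) = 0.
  have cfin : g c < +oo by rewrite hc ltry.
  rewrite measureD //; change (g c - g (c `&` y) = 0); by rewrite hc hy subee.
apply/eqP; rewrite eq_le; apply/andP; split.
  by rewrite -hc le1 // => z [].
rewrite -[X in X <= _]hc.
have sub : c `<=` (c `&` (x `&` y)) `|` ((c `\` x) `|` (c `\` y)).
  move=> z cz; have [xz|nxz] := pselect (x z); last by right; left.
  have [yz|nyz] := pselect (y z); last by right; right.
  by left.
have := le_measure g _ _ sub; rewrite !inE => /(_ mc).
have mU : measurable ((c `&` (x `&` y)) `|` ((c `\` x) `|` (c `\` y))).
  by apply: measurableU => //; exact: measurableU.
move=> /(_ mU) /le_trans; apply.
apply: le_trans (measureU2 g _ _) _ => //; first exact: measurableU.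
apply: le_trans (leeD2l _ (measureU2 g _ _)) _ => //.
by rewrite /= hDx hDy !adde0.
Qed.

End CM2.



Section Gs.
Context (R : realType) (d : measure_display) (X : measurableType d).
Local Notation T := (XstarM R X).
Variable P : probability T R.
Variable RHS : set (set T).
Hypothesis RHSs : sigma_algebra setT RHS.
Hypothesis RHSm : RHS `<=` measurable.

Definition symd (A B : set T) := (A `\` B) `|` (B `\` A).

Lemma symd_meas A B : measurable A -> measurable B -> measurable (symd A B).
Proof. by move=> mA mB; apply: measurableU; apply: measurableD. Qed.

Lemma symdC A B : symd A B = symd B A.
Proof. by rewrite /symd setUC. Qed.

Lemma symd_tr A B C : symd A C `<=` symd A B `|` symd B C.
Proof.
move=> z [[Az nCz]|[Cz nAz]]; have [Bz|nBz] := pselect (B z).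
- by right; left.
- by left; left.
- by left; right.
- by right; right.
Qed.

Lemma symd0 A : symd A A = set0.
Proof. by rewrite /symd setDv setU0. Qed.

Definition Gs : set (set T) :=
  [set E | measurable E /\ exists B, RHS B /\ P (symd E B) = 0].

Lemma Gs_meas E : Gs E -> measurable E. Proof. by case. Qed.

Lemma P0sub A B : measurable A -> measurable B -> A `<=` B -> P B = 0 -> P A = 0.
Proof.
move=> mA mB AB PB; apply/eqP; rewrite eq_le measure_ge0 andbT -PB.
by apply: le_measure; rewrite ?inE.
Qed.

Lemma Gs_sigma : sigma_algebra setT Gs.
Proof.
have [R0 RC RU] := RHSs.
split.
- split; first exact: measurable0.
  by exists set0; split => //; rewrite symd0 measure0.
- move=> A [mA [B [RB PAB]]]; split; first exact: measurableD.
  exists (setT `\` B); split; first exact: RC.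
  suff -> : symd (setT `\` A) (setT `\` B) = symd A B by [].
  rewrite /symd !setTD; apply/seteqP; split => z /=.
    by move=> [[nA nnB]|[nB nnA]]; [right|left]; split => //; apply: contrapT.
  by move=> [[Az nB]|[Bz nA]]; [right|left]; split.
- move=> F GF; split.
    by apply: bigcup_measurable => k _; case: (GF k).
  have /choice[B hB] : forall n, exists B, RHS B /\ P (symd (F n) B) = 0.
    by move=> n; case: (GF n) => _.
  exists (\bigcup_n B n); split; first by apply: RU => n; case: (hB n).
  have mB n : measurable (B n) by apply: RHSm; case: (hB n).
  have mF n : measurable (F n) by case: (GF n).
  apply: (P0sub (B := \bigcup_n symd (F n) (B n))).
  + by apply: symd_meas; apply: bigcup_measurable.
  + by apply: bigcup_measurable => k _; apply: symd_meas.
  + move=> z [[[n _ Fz] nB]|[[n _ Bz] nF]].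
      exists n => //; left; split => // Bnz; apply: nB; by exists n.
    exists n => //; right; split => // Fnz; apply: nF; by exists n.
  + apply/eqP; rewrite eq_le measure_ge0 andbT.
    apply: le_trans (measure_sigma_subadditive P (A := \bigcup_n symd (F n) (B n)) (F := fun n => symd (F n) (B n)) _ _ _) _.
    * by move=> n; apply: symd_meas.
    * by apply: bigcup_measurable => k _; apply: symd_meas.
    * by [].
    by rewrite eseries0 // => i _ _; case: (hB i).
Qed.

Lemma Gs_RHS : RHS `<=` Gs.
Proof. by move=> B RB; split; [exact: RHSm|exists B; rewrite symd0 measure0]. Qed.

Lemma Gs_null E B : Gs B -> measurable E -> P (symd E B) = 0 -> Gs E.
Proof.
move=> [mB [B' [RB' PB']]] mE PEB; split => //; exists B'; split => //.
have mB' := RHSm RB'.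
apply: (P0sub (B := symd E B `|` symd B B')).
- exact: symd_meas.
- by apply: measurableU; apply: symd_meas.
- exact: symd_tr.
apply/eqP; rewrite eq_le measure_ge0 andbT.
apply: le_trans (measureU2 P _ _) _; try by apply: symd_meas.
by rewrite /= PEB PB' adde0.
Qed.

Lemma Gs_closed E : measurable E ->
  (forall n, exists Z, Gs Z /\ P (symd E Z) <= (1 / (2 ^ n.+1)%:R)%:E) -> Gs E.
Proof.
move=> mE /choice[Z hZ].
have GZ n : Gs (Z n) by case: (hZ n).
have mZ n : measurable (Z n) by case: (GZ n).
have [G0 GC GU] := Gs_sigma.
pose B := \bigcup_m \bigcap_(n in [set n | (m <= n)%N]) Z n.
have GB : Gs B.
  apply: (GU) => m.
  rewrite -[X in Gs X]setCK; rewrite -setTD; apply: (GC).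
  rewrite setC_bigcap bigcup_mkcond; apply: (GU) => n.
  case: ifP => _; last exact: G0.
  by rewrite -setTD; apply: (GC).
apply: (Gs_null GB mE).
have mB : measurable B by case: GB.
apply: (P0sub (B := lim_sup_set (fun n => symd E (Z n)))).
- exact: symd_meas.
- apply: bigcapT_measurable => k; apply: bigcup_measurable => j _.
  exact: symd_meas.
- move=> z [[Ez nBz]|[Bz nEz]] m _.
  + have : ~ (\bigcap_(n in [set n | (m <= n)%N]) Z n) z by move=> h; apply: nBz; exists m.
    move=> /existsNP[n /not_implyP[mn nZ]]; exists n => //; by left.
  + case: Bz => m' _ hm'; exists (maxn m m') => /=; first by rewrite leq_maxl.
    by right; split => //; apply: hm'; rewrite /= leq_maxr.
- apply: lim_sup_set_cvg0.
    by move=> k; apply: symd_meas.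
  apply: le_lt_trans (_ : 1%:E < +oo); last exact: ltry.
  have h := @epsilon_trick0 R 1 xpredT ler01.
  apply: le_trans h.
  apply: lee_nneseries => // n _; case: (hZ n) => _.
  by rewrite mul1r.
Qed.

End Gs.



Section Good.
Context (R : realType) (d : measure_display) (X : measurableType d).
Local Notation T := (XstarM R X).
Variable P : probability T R.
Variable RHS : set (set T).
Hypothesis RHSs : sigma_algebra setT RHS.
Hypothesis RHSm : RHS `<=` measurable.

Local Notation G := (Gs P RHS).
Local Notation XG := (g_sigma_algebraType G).

Lemma measXG : (G.-sigma.-measurable : set (set XG)) = G.
Proof. by apply: measurable_g_measurableTypeE; exact: Gs_sigma. Qed.

Definition good (A : set X) := forall S : set (\bar R), measurable S -> G (N A @^-1` S).

Definition NG (A : set X) : XG -> \bar R := N A.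

Lemma goodP A : good A <-> measurable_fun [set: XG] (NG A).
Proof.
split.
  move=> gA _ S mS; rewrite setTI measXG; exact: gA.
move=> mf S mS; have := mf measurableT S mS; rewrite setTI measXG; exact.
Qed.

Lemma mfG (f : XG -> \bar R) S : measurable_fun [set: XG] f -> measurable S ->
  G (f @^-1` S).
Proof. by move=> mf mS; have := mf measurableT S mS; rewrite setTI measXG. Qed.

Lemma good_star (D : set (set X)) : D `<=` measurable -> star D `<=` RHS ->
  forall A, D A -> good A.
Proof.
move=> Dm sD A DA S mS; apply: (Gs_RHS P RHSm); apply: sD.
apply: sub_sigma_algebra; exists A, S; split => //.
Qed.

Lemma N_meas (A : set X) (S : set (\bar R)) : measurable A -> measurable S ->
  measurable (N A @^-1` S : set T).
Proof.
move=> mA mS; apply: sub_sigma_algebra; exists A, S; split => //.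
Qed.

Lemma good_bigcup (A : (set X)^nat) : (forall n, measurable (A n)) ->
  trivIset setT A -> (forall n, good (A n)) -> good (\bigcup_n A n).
Proof.
move=> mA tA gA; apply/goodP.
have -> : NG (\bigcup_n A n) = fun g => \sum_(n <oo | n \in xpredT) NG (A n) g.
  apply/funext => g; rewrite /NG NE.
  have := measure_bigcup (cmf g) setT A (fun i _ => mA i) tA.
  rewrite /= => ->; congr (limn _); apply/funext => n; apply: eq_bigl => i.
  by rewrite in_setT.
apply: ge0_emeasurable_sum.
  by move=> k x _ _; exact: cmf_ge0.
by move=> k _; apply/goodP.
Qed.

Lemma good_null (A : set X) (Q : set T) : measurable A -> measurable Q -> P Q = 0 ->
  (forall S, measurable S -> G ((N A @^-1` S) `\` Q)) -> good A.
Proof.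
move=> mA mQ PQ h S mS.
have -> : N A @^-1` S = (N A @^-1` S `\` Q) `|` (N A @^-1` S `&` Q).
  by rewrite setDE -setIUr setUCl setIT.
have [_ _ GU] := Gs_sigma P RHSs RHSm.
rewrite -bigcup2E; apply: (GU) => -[|[|n]] /=; first exact: h.
  apply: (@Gs_null _ _ _ P RHS RHSm _ set0) => //.
  - by apply: (Gs_RHS P RHSm); case: RHSs.
  - apply: measurableI => //; exact: N_meas.
  - rewrite /symd set0D setD0 setU0; apply: P0sub (PQ) => //.
    + apply: measurableI => //; exact: N_meas.
by apply: (Gs_RHS P RHSm); case: RHSs.
Qed.

Lemma good_diff (A B : set X) : measurable A -> measurable B -> B `<=` A ->
  good A -> good B -> P (N A @^-1` [set +oo]) = 0 -> good (A `\` B).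
Proof.
move=> mA mB BA gA gB PA.
apply: (good_null (Q := N A @^-1` [set +oo])) => //.
- exact: measurableD.
- by apply: N_meas.
move=> S mS.
have mf : measurable_fun [set: XG] (NG A \- NG B).
  by apply: emeasurable_funB; apply/goodP.
have key g : N A g != +oo -> N (A `\` B) g = N A g - N B g.
  move=> hg; rewrite !NE measureD //; last by rewrite ltey.
  by rewrite /= setIidr.
have -> : N (A `\` B) @^-1` S `\` N A @^-1` [set +oo] =
    ((NG A \- NG B) @^-1` S) `&` ~` (N A @^-1` [set +oo]).
  apply/seteqP; split => g /=.
  - move=> [hS hoo]; split => //.
    by rewrite /NG -key //; apply/eqP.
  - move=> [hS hoo]; split => //.
    by move: hS; rewrite /NG -key //; apply/eqP.
suff : (measurable : set (set XG)) (((NG A \- NG B) @^-1` S) `&` ~` (N A @^-1` [set +oo])).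
  by rewrite measXG.
apply: measurableI.
  by rewrite measXG; apply: mfG.
apply: measurableC; rewrite measXG; exact: gA.
Qed.

End Good.



Section Bad.
Context (R : realType) (d : measure_display) (X : measurableType d).
Local Notation T := (XstarM R X).
Variable mu : {measure set X -> \bar R}.
Variable P : probability T R.
Hypothesis hP : poisson_suspension_measure mu P.

Definition bad (c : set X) : set T :=
  ~` ([set g | N c g = ((0%:R : R)%:E)] `|` [set g | N c g = ((1%:R : R)%:E)]).

Lemma Nk_meas c (k : nat) : measurable c -> measurable ([set g | N c g = ((k%:R : R)%:E)] : set T).
Proof.
move=> mc; change (measurable (N c @^-1` [set ((k%:R : R)%:E)] : set T)).
by apply: N_meas.
Qed.

Lemma bad_meas c : measurable c -> measurable (bad c).
Proof.
move=> mc; apply: measurableC; apply: measurableU; apply: Nk_meas => //.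
Qed.

Lemma real_ineq (m : R) : (0 <= m)%R -> (1 - (expR (- m) + expR (- m) * m) <= m * m)%R.
Proof.
move=> m0; have h := expR_ge1Dx (- m).
nra.
Qed.

Lemma P_bad c : measurable c -> mu c < +oo -> P (bad c) <= mu c * mu c.
Proof.
move=> mc mcf.
have [_ hP2] := hP; have [hk _] := hP2 c mc; have {hk}hk := hk mcf.
have h0 := hk 0%N; rewrite expr0 fact0 mulr1 divr1 in h0.
have h1 := hk 1%N; rewrite expr1 divr1 in h1.
have m0 := measure_ge0 mu c.
rewrite /bad probability_setC; last by apply: measurableU; apply: Nk_meas.
rewrite measureU; [|apply: Nk_meas => //|apply: Nk_meas => //|].
- rewrite /= h0 h1.
  have mcE : mu c = (fine (mu c))%:E by rewrite fineK // ge0_fin_numE.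
  rewrite mcE -EFinM -EFinD lee_fin /=.
  exact: (real_ineq (fine_ge0 m0)).
- apply/seteqP; split => g //= [-> /eqP]; by rewrite eqe (eqr_nat R 0 1).
Qed.

Lemma P_bad_part (c : nat -> set X) (m : nat) (eps : R) :
  (forall j, measurable (c j)) ->
  (forall j, mu (c j) <= eps%:E) -> (0 <= eps)%R ->
  mu (\big[setU/set0]_(j < m) c j) < +oo ->
  P (\big[setU/set0]_(j < m) bad (c j)) <= eps%:E * \sum_(j < m) mu (c j).
Proof.
move=> mc ce e0 Dfin.
apply: le_trans (Boole_inequality P (A := fun j => bad (c j)) (n := m) (fun i _ => bad_meas (mc i))) _.
rewrite ge0_sume_distrr; last by move=> i _; exact: measure_ge0.
apply: lee_sum => i _.
have cfin : mu (c i) < +oo.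
  apply: le_lt_trans Dfin; apply: le_measure; rewrite ?inE //.
    by apply: bigsetU_measurable.
  exact: bigsetU_sup.
apply: le_trans (P_bad (mc i) cfin) _.
by apply: lee_wpmul2r => //; exact: measure_ge0.
Qed.

End Bad.



Section Closure.
Context (d : measure_display) (X : measurableType d).
Variable C : set (set X).
Hypothesis HC : sigma_algebra setT C.

Lemma C0 : C set0. Proof. by case: HC. Qed.
Lemma CT : C setT. Proof. by have [h0 hC _] := HC; have := hC set0 h0; rewrite setD0. Qed.
Lemma CC A : C A -> C (setT `\` A). Proof. by case: HC => _ hC _; apply: hC. Qed.
Lemma CU A B : C A -> C B -> C (A `|` B).
Proof.
have [h0 _ hU] := HC => CA CB; rewrite -bigcup2E; apply: hU => -[|[|n]] //=.
Qed.
Lemma CI A B : C A -> C B -> C (A `&` B).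
Proof.
move=> CA CB; have -> : A `&` B = setT `\` ((setT `\` A) `|` (setT `\` B)).
  by rewrite !setTD setCU !setCK.
by apply: CC; apply: CU; apply: CC.
Qed.
Lemma CD A B : C A -> C B -> C (A `\` B).
Proof. by move=> CA CB; rewrite setDE -setTD; apply: CI => //; apply: CC. Qed.
Lemma CbigU (F : (set X)^nat) : (forall n, C (F n)) -> C (\bigcup_n F n).
Proof. by case: HC => _ _ hU; apply: hU. Qed.
Lemma CbigI (F : (set X)^nat) : (forall n, C (F n)) -> C (\bigcap_n F n).
Proof.
move=> CF; rewrite -[X in C X]setCK -setTD; apply: CC.
by rewrite setC_bigcap; apply: CbigU => n; rewrite -setTD; apply: CC.
Qed.
Lemma CbigsetU (F : (set X)^nat) n : (forall n, C (F n)) -> C (\big[setU/set0]_(i < n) F i).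
Proof.
move=> CF; elim: n => [|n ih]; first by rewrite big_ord0; exact: C0.
by rewrite big_ord_recr /=; apply: CU.
Qed.
End Closure.

Section NonAtomic.
Context (R : realType) (d : measure_display) (X : measurableType d).
Variable mu : {measure set X -> \bar R}.
Variable C : set (set X).
Hypothesis HC : is_sub_sigma_algebra C.
Hypothesis HNA : non_atomic_on mu C.

Let Cs : sigma_algebra setT C := HC.1.
Let Cm A : C A -> measurable A := fun h => HC.2 A h.

Lemma split_half A : C A -> 0 < mu A -> mu A < +oo ->
  exists B, [/\ C B, B `<=` A, 0 < mu B & mu B + mu B <= mu A].
Proof.
move=> CA pA fA.
have : ~ (forall B, C B -> B `<=` A -> mu B = 0 \/ mu (A `\` B) = 0).
  by move=> h; apply: (HNA (A := A)); split.
move=> /existsNP[B /not_implyP[CB /not_implyP[BA /not_orP[hB hAB]]]].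
have mA := Cm CA; have mB := Cm CB.
have EA : mu A = mu (A `\` B) + mu B by rewrite (measureDI mu mA mB) setIidr.
have pB : 0 < mu B by rewrite lt0e measure_ge0 andbT; apply/eqP.
have pAB : 0 < mu (A `\` B) by rewrite lt0e measure_ge0 andbT; apply/eqP.
have [le|lt] := leP (mu B) (mu (A `\` B)).
  exists B; split => //; rewrite EA; exact: leeD.
exists (A `\` B); split => //; first exact: CD.
by rewrite EA; apply: leeD => //; apply: ltW.
Qed.

Lemma small A (del : R) : C A -> 0 < mu A -> mu A < +oo -> (0 < del)%R ->
  exists B, [/\ C B, B `<=` A, 0 < mu B & mu B <= del%:E].
Proof.
move=> CA pA fA dp.
set a := fine (mu A).
have aE : mu A = a%:E by rewrite fineK // ge0_fin_numE // measure_ge0.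
have a0 : (0 < a)%R by rewrite -lte_fin -aE.
have claim : forall n, exists B, [/\ C B, B `<=` A, 0 < mu B & mu B <= (a / 2 ^+ n)%:E].
  elim => [|n [B [CB BA pB hB]]].
    by exists A; split => //; rewrite expr0 divr1 aE.
  have fB : mu B < +oo by apply: le_lt_trans hB _; rewrite ltry.
  have [B' [CB' B'B pB' hB']] := split_half CB pB fB.
  exists B'; split => //; first exact: subset_trans B'B BA.
  have fB' : mu B' \is a fin_num.
    rewrite ge0_fin_numE ?measure_ge0 //; apply: le_lt_trans fB.
    by apply: le_measure; rewrite ?inE //; apply: Cm.
  rewrite -(fineK fB') lee_fin.
  have : ((fine (mu B') + fine (mu B')) <= a / 2 ^+ n)%R.
    by rewrite -lee_fin EFinD fineK // (le_trans hB' hB).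
  rewrite exprSr invfM mulrA; set c := (a / 2 ^+ n)%R => h.
  lra.
set k := (Num.truncn (a / del)).+1.
have h1 : (a / del < k%:R)%R by apply: truncnS_gt.
have h2 : (k%:R < 2 ^+ k :> R)%R by rewrite -natrX ltr_nat ltn_expl.
have [B [CB BA pB hB]] := claim k.
exists B; split => //; apply: le_trans hB _; rewrite lee_fin.
have p2 : (0 < 2 ^+ k :> R)%R by apply: exprn_gt0.
rewrite ler_pdivrMr //.
have : (a / del < 2 ^+ k)%R by apply: lt_trans h2.
rewrite ltr_pdivrMr // => h; rewrite mulrC; exact: ltW.
Qed.

Lemma choose_big (eps : R) (Rs : set X) : (0 < eps)%R ->
  exists B, [/\ C B, B `<=` Rs, mu B <= eps%:E &
    forall B', C B' -> B' `<=` Rs -> mu B' <= eps%:E -> mu B' <= mu B + mu B].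
Proof.
move=> ep.
set S := [set mu B | B in [set B | C B /\ B `<=` Rs /\ mu B <= eps%:E]].
set s := ereal_sup S.
have s_ub B' : C B' -> B' `<=` Rs -> mu B' <= eps%:E -> mu B' <= s.
  by move=> *; apply: ereal_sup_ubound; exists B'.
have s_le : s <= eps%:E by apply: ge_ereal_sup => _ [B [_ [_ h]] <-].
have s_ge0 : 0 <= s.
  rewrite -(measure0 mu); apply: s_ub => //; first by case: Cs.
  by rewrite measure0 lee_fin ltW.
have [s0|sp] := eqVneq s 0.
  exists set0; split => //; first by case: Cs.
    by rewrite measure0 lee_fin ltW.
  by move=> B' CB' B'R hB'; rewrite measure0 adde0 -s0; apply: s_ub.
have sp' : 0 < s by rewrite lt0e sp s_ge0.
have sfin : s \is a fin_num by rewrite ge0_fin_numE // (le_lt_trans s_le) // ltry.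
set r := fine s.
have r0 : (0 < r)%R by rewrite -lte_fin fineK.
have : (r / 2)%:E < s by rewrite -(fineK sfin) -/r lte_fin; lra.
move=> /ereal_sup_gt[_ [B [CB [BR hB]]] <-] hlt.
exists B; split => // B' CB' B'R hB'.
apply: le_trans (s_ub _ CB' B'R hB') _.
rewrite -(fineK sfin) -/r.
have -> : r = (r / 2 + r / 2)%R by lra.
by rewrite EFinD; apply: leeD; apply: ltW.
Qed.

Lemma na_partition (D : set X) (eps : R) : C D -> mu D < +oo -> (0 < eps)%R ->
  exists (c : nat -> set X) (m : nat), [/\ forall j, C (c j), trivIset setT c,
    \big[setU/set0]_(j < m) c j = D & forall j, mu (c j) <= eps%:E].
Proof.
move=> CD0 fD ep.
have /choice[f hf] := fun Rs => choose_big Rs ep.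
pose Rs n := iter n (fun A => A `\` f A) D.
pose Bs n := f (Rs n).
have RsS n : Rs n.+1 = Rs n `\` Bs n by [].
have CBsR n : C (Rs n) -> C (Bs n) by move=> _; case: (hf (Rs n)).
have BsRs n : Bs n `<=` Rs n by case: (hf (Rs n)).
have Bseps n : mu (Bs n) <= eps%:E by case: (hf (Rs n)).
have CRs n : C (Rs n).
  elim: n => [|n ih] //; rewrite RsS; apply: (CD Cs) => //; exact: CBsR.
have CBs n : C (Bs n) by apply: CBsR.
have Rsle n k : Rs (n + k)%N `<=` Rs n.
  elim: k => [|k ih]; first by rewrite addn0.
  by rewrite addnS RsS; apply: subset_trans ih; apply: subDsetl.
have RsD n : Rs n `<=` D by have := Rsle 0%N n; rewrite add0n.
have mRs n : measurable (Rs n) by apply: Cm.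
have mBs n : measurable (Bs n) by apply: Cm.
have finD A : measurable A -> A `<=` D -> mu A < +oo.
  move=> mA AD; apply: le_lt_trans fD; apply: le_measure; rewrite ?inE //; exact: Cm.
have tB : trivIset setT Bs.
  have h i j : (i < j)%N -> Bs i `&` Bs j = set0.
    move=> ij; apply/seteqP; split => // z [zi zj].
    have := Rsle i.+1 (j - i.+1)%N; rewrite subnKC // RsS => /(_ z (BsRs j z zj)).
    by case.
  move=> i j _ _ [z [zi zj]]; case: (ltngtP i j) => [ij|ji|//].
    by have := h _ _ ij; move/seteqP => [/(_ z (conj zi zj))].
  by have := h _ _ ji; move/seteqP => [/(_ z (conj zj zi))].
have union n : D = \big[setU/set0]_(i < n) Bs i `|` Rs n.
  elim: n => [|n ih]; first by rewrite big_ord0 set0U.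
  rewrite {1}ih big_ord_recr -setUA; congr (_ `|` _).
  by rewrite RsS setDUK.
pose Rinf := \bigcap_n Rs n.
have CRinf : C Rinf by apply: (CbigI Cs).
have mRinf : measurable Rinf by apply: Cm.
have mu_inf : mu Rinf = 0.
  apply/eqP; rewrite eq_le measure_ge0 andbT leNgt; apply/negP => pos.
  have fRinf : mu Rinf < +oo by apply: finD => // z; move/(_ 0%N I); apply: RsD.
  have [B [CB BR pB hB]] := small CRinf pos fRinf ep.
  have mB : measurable B by apply: Cm.
  have key n : mu B <= mu (Bs n) + mu (Bs n).
    by case: (hf (Rs n)) => _ _ _; apply => //; apply: subset_trans BR _ => z; apply.
  have fB : mu B \is a fin_num.
    by rewrite ge0_fin_numE ?measure_ge0 // (finD _ mB) // => z /BR /(_ 0%N I) /RsD.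
  set b := fine (mu B).
  have b0 : (0 < b)%R by rewrite -lte_fin fineK.
  have fDn : mu D \is a fin_num by rewrite ge0_fin_numE ?measure_ge0.
  set dd := fine (mu D).
  have step K : (K%:R * b)%:E <= \sum_(i < K) (mu (Bs i) + mu (Bs i)).
    elim: K => [|K ih]; first by rewrite big_ord0 mul0r.
    rewrite big_ord_recr /= -natr1 mulrDl mul1r EFinD.
    by apply: leeD => //; rewrite fineK.
  have sumle K : \sum_(i < K) mu (Bs i) <= mu D.
    rewrite -measure_bigsetU //; apply: le_measure; rewrite ?inE //.
    - by apply: bigsetU_measurable => i _.
    - by apply: Cm.
    by move=> z hz; rewrite (union K); left.
  set K := (Num.truncn ((dd + dd) / b)).+1.
  have hK : ((dd + dd) / b < K%:R)%R by apply: truncnS_gt.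
  have := step K; rewrite big_split /=.
  move=> /le_trans /(_ (leeD (sumle K) (sumle K))).
  rewrite -(fineK fDn) -EFinD lee_fin -/dd.
  have := hK; rewrite ltr_pdivrMr // => h1 h2.
  have : ((dd + dd) < (dd + dd))%R by apply: lt_le_trans h1 _.
  by rewrite ltxx.
have dec : nonincreasing_seq Rs.
  move=> n k nk; apply/subsetPset; have := Rsle n (k - n)%N; rewrite subnKC //.
have cv1 : (mu \o Rs) @ \oo --> mu Rinf.
  apply: nonincreasing_cvg_mu => //; apply: finD => //.
have dec2 : nonincreasing_seq (mu \o Rs).
  move=> n k nk; apply: le_measure; rewrite ?inE //.
  by have := Rsle n (k - n)%N; rewrite subnKC.
have cv2 := ereal_nonincreasing_cvgn dec2.
have einf : ereal_inf ((mu \o Rs) @` setT) = 0.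
  by rewrite -(cvg_lim _ cv2) // (cvg_lim _ cv1) // mu_inf.
have : ereal_inf ((mu \o Rs) @` setT) < eps%:E by rewrite einf lte_fin.
move=> /ereal_inf_lt[_ [N _ <-]] /= hN.
exists (fun j => if (j < N)%N then Bs j else if j == N then Rs N else set0), N.+1.
split.
- move=> j; case: ifP => _; first exact: CBs.
  by case: ifP => _ //; case: Cs.
- move=> i j _ _ [z [zi zj]].
  wlog ij : i j zi zj / (i <= j)%N.
    move=> H; case: (leqP i j) => h; first exact: H.
    by apply/esym; apply: H => //; apply: ltnW.
  move: ij; rewrite leq_eqVlt => /orP[/eqP //|ij].
  have iN : (i < N)%N.
    move: zj; case: ifP => [jN _|_]; first exact: ltn_trans ij jN.
    by case: ifP => [/eqP <- _ //|_ //].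
  move: zi; rewrite iN => zi.
  move: zj; case: ifP => jN zj.
    by apply: tB => //; exists z.
  move: zj; case: ifP => [/eqP jE zj|_ //].
  subst j; exfalso.
  have := Rsle i.+1 (N - i.+1)%N; rewrite subnKC // RsS => /(_ z zj) [_]; apply.
  exact: zi.
- rewrite big_ord_recr /= ltnn eqxx (union N); congr (_ `|` _).
  by apply: eq_bigr => i _; rewrite ltn_ord.
- move=> j; case: ifP => _; first exact: Bseps.
  case: ifP => _; first exact: ltW.
  by rewrite measure0 lee_fin ltW.
Qed.

End NonAtomic.



Lemma in_bigsetU (U : Type) (F : nat -> set U) m z :
  (\big[setU/set0]_(j < m) F j) z <-> exists2 j, (j < m)%N & F j z.
Proof.
rewrite -bigcup_mkord; split; first by case=> j jm Fz; exists j.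
by case=> j jm Fz; exists j.
Qed.

Section Main.
Context (R : realType) (d : measure_display) (X : measurableType d).
Local Notation T := (XstarM R X).
Variable mu : {measure set X -> \bar R}.
Variables (alpha beta C : set (set X)).
Variable P : probability T R.
Hypothesis Ha : is_sub_sigma_algebra alpha.
Hypothesis Hb : is_sub_sigma_algebra beta.
Hypothesis HC : is_sub_sigma_algebra C.
Hypothesis HNA : non_atomic_on mu C.
Hypothesis hP : poisson_suspension_measure mu P.

Local Notation CA := (sjoin C alpha).
Local Notation CB := (sjoin C beta).
Local Notation RHS := (sjoin_star (star (R := R) CA) (star (R := R) CB)).

Lemma sjoin_meas (A B : set (set X)) : A `<=` measurable -> B `<=` measurable ->
  sjoin A B `<=` measurable.
Proof.
move=> hA hB; apply: smallest_sub; first exact: sigma_algebra_measurable.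
by move=> E [/hA|/hB].
Qed.

Lemma star_mono (D D' : set (set X)) : D `<=` D' -> star (R := R) D `<=` star D'.
Proof.
move=> DD'; apply: sub_sigma_algebra2 => E [A [S [DA mS ->]]].
by exists A, S; split => //; apply: DD'.
Qed.

Lemma star_meas (D : set (set X)) : D `<=` measurable -> star (R := R) D `<=` (measurable : set (set T)).
Proof. by move=> Dm; apply: (star_mono Dm). Qed.

Lemma CAm : CA `<=` measurable. Proof. exact: sjoin_meas HC.2 Ha.2. Qed.
Lemma CBm : CB `<=` measurable. Proof. exact: sjoin_meas HC.2 Hb.2. Qed.

Lemma RHSs : sigma_algebra setT RHS. Proof. exact: smallest_sigma_algebra. Qed.
Lemma RHSm : RHS `<=` measurable.
Proof.
apply: smallest_sub; first exact: sigma_algebra_measurable.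
by move=> E [/(star_meas CAm)|/(star_meas CBm)].
Qed.

Lemma CAs : sigma_algebra setT CA. Proof. exact: smallest_sigma_algebra. Qed.
Lemma CBs : sigma_algebra setT CB. Proof. exact: smallest_sigma_algebra. Qed.

Lemma good_CA A : CA A -> good P RHS A.
Proof.
apply: (good_star P RHSm CAm) => E hE.
by apply: sub_sigma_algebra; left.
Qed.

Lemma good_CB A : CB A -> good P RHS A.
Proof.
apply: (good_star P RHSm CBm) => E hE.
by apply: sub_sigma_algebra; right.
Qed.

Lemma C_CA : C `<=` CA. Proof. by move=> A CA0; apply: sub_sigma_algebra; left. Qed.
Lemma C_CB : C `<=` CB. Proof. by move=> A CA0; apply: sub_sigma_algebra; left. Qed.
Lemma a_CA : alpha `<=` CA. Proof. by move=> A CA0; apply: sub_sigma_algebra; right. Qed.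
Lemma b_CB : beta `<=` CB. Proof. by move=> A CA0; apply: sub_sigma_algebra; right. Qed.

Lemma core x y D : CA x -> x `<=` D -> C D -> mu D < +oo -> beta y ->
  good P RHS (x `&` y).
Proof.
move=> CAx xD CD fD by_ S mS.
have mx := CAm CAx; have my := Hb.2 _ by_; have mD := HC.2 _ CD.
have mxy : measurable (x `&` y) by apply: measurableI.
apply: (Gs_closed RHSs RHSm); first exact: N_meas.
move=> n.
set del : R := (1 / (2 ^ n.+1)%:R)%R.
have del0 : (0 < del)%R by rewrite /del mul1r invr_gt0 ltr0n expn_gt0.
have fDn : mu D \is a fin_num by rewrite ge0_fin_numE ?measure_ge0.
set dd := fine (mu D).
have dd0 : (0 <= dd)%R by apply: fine_ge0; apply: measure_ge0.
set eps := (del / (dd + 1))%R.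
have eps0 : (0 < eps)%R by rewrite /eps divr_gt0 // ltr_wpDl.
have [c [m [Cc tc Uc ce]]] := na_partition HC HNA CD fD eps0.
have mc j : measurable (c j) by apply: HC.2; apply: Cc.
pose f : g_sigma_algebraType (Gs P RHS) -> \bar R :=
  fun g => \sum_(j < m) (@NG _ _ _ P RHS (c j `&` x) g * @NG _ _ _ P RHS (c j `&` y) g).
have mf : measurable_fun setT f.
  apply: emeasurable_sum => j; apply: emeasurable_funM; apply/(goodP P RHSs RHSm).
  - by apply: good_CA; apply: (CI CAs) => //; apply: C_CA.
  - by apply: good_CB; apply: (CI CBs) => //; [apply: C_CB | apply: b_CB].
exists (f @^-1` S); split; first exact: (mfG RHSs RHSm mf mS).
set bb := \big[setU/set0]_(j < m) bad (R := R) (c j).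
have mbb : measurable bb by apply: bigsetU_measurable => j _; apply: bad_meas.
have eqf g : ~ bb g -> N (x `&` y) g = f g.
  move=> nb.
  have hc j : (j < m)%N -> cmf g (c j) = 0 \/ cmf g (c j) = 1.
    move=> jm; apply: contrapT => h; apply: nb.
    rewrite /bb; apply: (@bigsetU_sup _ j m (fun j => bad (R := R) (c j))) => //.
  rewrite /f NE.
  have -> : x `&` y = \big[setU/set0]_(j < m) (c j `&` (x `&` y)).
    apply/seteqP; split => z.
    - move=> hz; have : D z by apply: xD; case: hz.
      rewrite -Uc => /(in_bigsetU c) [j jm cz]; apply/(in_bigsetU (fun j => c j `&` (x `&` y))); exists j => //.
    - by move=> /(in_bigsetU (fun j => c j `&` (x `&` y))) [j _ [_ h]].
  have h := @measure_bigsetU _ _ _ (cmf g) (fun j => c j `&` (x `&` y)) _ _ m.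
  rewrite /= in h; rewrite h; last 2 first.
  - by move=> k; apply: measurableI => //; apply: measurableI.
  - move=> i j _ _ [z [[ci _] [cj _]]]; apply: tc => //; by exists z.
  apply: eq_bigr => j _.
  rewrite (cm_prod (g := cmf g) (fun A mA => N_vals g mA)) //; exact: hc.
have sub : symd (N (x `&` y) @^-1` S) (f @^-1` S) `<=` bb.
  move=> g hs; apply: contrapT => nb; move: hs; rewrite /symd /= (eqf g nb).
  by case=> -[].
apply: le_trans (le_measure P _ _ sub) _; rewrite ?inE //.
  apply: symd_meas; first exact: N_meas.
  by apply: Gs_meas; exact: (mfG RHSs RHSm mf mS).
have Dfin : mu (\big[setU/set0]_(j < m) c j) < +oo by rewrite Uc.
apply: le_trans (P_bad_part hP mc ce (ltW eps0) Dfin) _.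
have h := measure_bigsetU mu mc tc m; rewrite /= Uc in h.
have sE : \sum_(j < m) mu (c j) = dd%:E by rewrite -h /dd fineK.
rewrite sE -EFinM lee_fin.
rewrite /eps mulrAC ler_pdivrMr; last by rewrite ltr_wpDl.
by apply: ler_wpM2l; [apply: ltW | lra].
Qed.

Lemma fin_ae D : C D -> mu D < +oo -> P (N D @^-1` [set +oo]) = 0.
Proof.
move=> CD fD; have mD := HC.2 _ CD.
have fDn : mu D \is a fin_num by rewrite ge0_fin_numE ?measure_ge0.
set dd := fine (mu D).
have dd0 : (0 <= dd)%R by apply: fine_ge0; apply: measure_ge0.
apply/eqP; rewrite eq_le measure_ge0 andbT; apply/lee_addgt0Pr => e e0; rewrite add0e.
set eps := (e / (dd + 1))%R.
have eps0 : (0 < eps)%R by rewrite /eps divr_gt0 // ltr_wpDl.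
have [c [m [Cc tc Uc ce]]] := na_partition HC HNA CD fD eps0.
have mc j : measurable (c j) by apply: HC.2; apply: Cc.
set bb := \big[setU/set0]_(j < m) bad (R := R) (c j).
have mbb : measurable bb by apply: bigsetU_measurable => j _; apply: bad_meas.
have sub : N D @^-1` [set +oo] `<=` bb.
  move=> g /= hg; apply: contrapT => nb.
  have hc j : (j < m)%N -> cmf g (c j) = 0 \/ cmf g (c j) = 1.
    move=> jm; apply: contrapT => h; apply: nb.
    by rewrite /bb; apply: (@bigsetU_sup _ j m (fun j => bad (R := R) (c j))) => //.
  have h := @measure_bigsetU _ _ _ (cmf g) c mc tc m.
  rewrite /= Uc in h.
  have : cmf g D \is a fin_num.
    rewrite h; apply/sum_fin_numP => j _ _.
    by case: (hc j (ltn_ord j)) => ->.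
  by rewrite -NE hg.
apply: le_trans (le_measure P _ _ sub) _; rewrite ?inE //.
  by apply: N_meas.
have Dfin : mu (\big[setU/set0]_(j < m) c j) < +oo by rewrite Uc.
apply: le_trans (P_bad_part hP mc ce (ltW eps0) Dfin) _.
have h := measure_bigsetU mu mc tc m; rewrite /= Uc in h.
have sE : \sum_(j < m) mu (c j) = dd%:E by rewrite -h /dd fineK.
rewrite sE -EFinM lee_fin.
rewrite /eps mulrAC ler_pdivrMr; last by rewrite ltr_wpDl.
by apply: ler_wpM2l; [apply: ltW | lra].
Qed.

Hypothesis HCf : sigma_finite_on mu C.

Lemma main_good A : sjoin CA beta A -> good P RHS A.
Proof.
have [F [CF UF fF]] := HCf.
pose Fd := seqDU F.
have CFd k : C (Fd k).
  by apply: (CD HC.1) => //; apply: (CbigsetU HC.1).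
have mFd k : measurable (Fd k) by apply: HC.2.
have fFd k : mu (Fd k) < +oo.
  apply: le_lt_trans (fF k); apply: le_measure; rewrite ?inE //.
    by apply: HC.2.
  exact: subset_seqDU.
have tFd : trivIset setT Fd by apply: trivIset_seqDU.
have UFd : \bigcup_k Fd k = setT by rewrite -seqDU_bigcup_eq.
pose H' := [set A | measurable A /\ forall k, good P RHS (A `&` Fd k)].
pose Pi := [set A | exists x y, [/\ CA x, beta y & A = x `&` y]].
have PiI : setI_closed Pi.
  move=> U V [x [y [hx hy ->]]] [x' [y' [hx' hy' ->]]].
  exists (x `&` x'), (y `&` y'); split.
  - by apply: (CI CAs).
  - by apply: (CI Hb.1).
  - by rewrite setIACA.
have dH : dynkin H'.
  split.
  - split => // k; rewrite setTI; apply: good_CA; exact: C_CA.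
  - move=> B [mB hB]; split; first exact: measurableC.
    move=> k.
    have -> : ~` B `&` Fd k = Fd k `\` (B `&` Fd k).
      apply/seteqP; split => z /=.
        by move=> [nB Fz]; split => // -[].
      by move=> [Fz h]; split => // Bz; apply: h.
    apply: (good_diff RHSs RHSm) => //.
    + exact: measurableI mB (mFd k).
    + by apply: good_CA; apply: C_CA.
    + exact: fin_ae.
  - move=> G tG HG; split.
      by apply: bigcup_measurable => n _; case: (HG n).
    move=> k; rewrite setI_bigcupl; apply: (good_bigcup RHSs RHSm).
    + by move=> n; apply: measurableI => //; case: (HG n).
    + move=> i j _ _ [z [[gi _] [gj _]]]; apply: tG => //; by exists z.
    + by move=> n; case: (HG n) => _; apply.
have PiH : Pi `<=` H'.
  move=> B [x [y [hx hy ->]]]; split.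
    by apply: measurableI; [apply: CAm | apply: Hb.2].
  move=> k.
  have -> : x `&` y `&` Fd k = (x `&` Fd k) `&` y by rewrite setIAC.
  have h1 : CA (x `&` Fd k) by apply: (CI CAs) => //; apply: C_CA.
  exact: (core h1 (@subIsetr _ x (Fd k)) (CFd k) (fFd k) hy).
have sH : <<s Pi >> `<=` H'.
  rewrite -setI_closed_g_dynkin_g_sigma_algebra //.
  by apply: smallest_sub.
have sPi : sjoin CA beta `<=` <<s Pi >>.
  apply: smallest_sub; first exact: smallest_sigma_algebra.
  move=> B [hB|hB]; apply: sub_sigma_algebra.
  - exists B, setT; split => //; first by apply: (CT Hb.1).
    by rewrite setIT.
  - exists setT, B; split => //; first by apply: (CT CAs).
    by rewrite setTI.
move=> hA; have [mA hk] := sH _ (sPi _ hA).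
have -> : A = \bigcup_k (A `&` Fd k) by rewrite -setI_bigcupr UFd setIT.
apply: (good_bigcup RHSs RHSm).
- by move=> n; apply: measurableI.
- move=> i j _ _ [z [[_ gi] [_ gj]]]; apply: tFd => //; by exists z.
- exact: hk.
Qed.

Lemma final : eq_mod P (star (sjoin CA beta)) RHS.
Proof.
split.
- move=> A hA.
  have : Gs P RHS A.
    move: A hA; apply: smallest_sub; first exact: Gs_sigma RHSs RHSm.
    move=> E [A [S [hA mS ->]]]; exact: main_good.
  by move=> [_ [B [RB hB]]]; exists B.
- move=> B RB; exists B; split; last by rewrite /= setDv setU0 measure0.
  move: B RB; apply: smallest_sub; first exact: smallest_sigma_algebra.
  move=> E [hE|hE].
  + move: E hE; apply: star_mono => U hU; apply: sub_sigma_algebra; by left.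
  + move: E hE; apply: star_mono; apply: smallest_sub; first exact: smallest_sigma_algebra.
    move=> U [hU|hU]; apply: sub_sigma_algebra; [left; exact: C_CA | by right].
Qed.

End Main.

Theorem lemma2p3 (R : realType) (d : measure_display) (X : measurableType d)
    (mu : {measure set X -> \bar R})
    (alpha beta C : set (set X))
    (P : probability (XstarM R X) R) :
  standard_borel R X ->
  sigma_finite setT mu ->
  is_sub_sigma_algebra alpha -> is_sub_sigma_algebra beta -> is_sub_sigma_algebra C ->
  sigma_finite_on mu C ->
  non_atomic_on mu C ->
  poisson_suspension_measure mu P ->
  eq_mod P (star (sjoin (sjoin C alpha) beta))
           (sjoin_star (star (sjoin C alpha)) (star (sjoin C beta))).
Proof.
move=> _ _ Ha Hb HC HCf HNA hP.
exact: (final Ha Hb HC HNA hP HCf).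
Qed.
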